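(* Let $b\in\mathbb R^d$ and $\lambda_1\ge\lambda_2\ge\dots\ge\lambda_d>0$. Let $F(y)=-\sum_{i=1}^d|b_i|\sqrt{y_i}-\sqrt{\sum_{i=1}^d\lambda_i^{-1}y_i}$ and let $y^\star$ be an optimal solution of $\min_{y\in\Delta_{d-1}}F(y)$. Then $y^\star_i\ge B_i$ for all $i\in[d]$, where $B_i=b_i^2\,(\|b\|_2+\lambda_d^{-1/2})^{-2}$.
   Context: $\Delta_{d-1}=\{y\in\mathbb R^d:y_i\ge0,\sum_iy_i=1\}$. *)

(* Defs.v *)
From mathcomp Require Import all_boot all_order all_algebra.
From mathcomp Require Import reals.
Set Implicit Arguments. Unset Strict Implicit. Unset Printing Implicit Defensive.
Import Order.TTheory GRing.Theory Num.Theory.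
Local Open Scope ring_scope.

Definition simplex (R : realType) (d : nat) (y : 'I_d -> R) : Prop :=
  (forall i, 0 <= y i) /\ \sum_(i < d) y i = 1.

Definition Fobj (R : realType) (d : nat) (b lam : 'I_d -> R) (y : 'I_d -> R) : R :=
  - (\sum_(i < d) `|b i| * Num.sqrt (y i))
  - Num.sqrt (\sum_(i < d) (lam i)^-1 * y i).

Definition norm2 (R : realType) (d : nat) (b : 'I_d -> R) : R :=
  Num.sqrt (\sum_(i < d) b i ^+ 2).

(* Main.v *)
Require Import Defs.
From mathcomp Require Import all_boot all_order all_algebra.
From mathcomp Require Import reals.
From mathcomp Require Import ring lra.
Import Order.TTheory GRing.Theory Num.Theory.
Local Open Scope ring_scope.





Lemma key (R : realFieldType) (be u v q w K : R) :
  0 <= be -> 0 <= u -> u ^+ 2 <= 1 -> 0 < w -> w <= 1 -> 0 <= q ->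
  q ^+ 2 = 1 - w ^+ 2 -> 0 <= v -> v ^+ 2 = u ^+ 2 + w ^+ 2 * (1 - u ^+ 2) ->
  be * u <= K -> q * K + be * (v - q * u) <= K ->
  2 * (be - u * K) <= w * (K - be * u + be).
Proof.
move=> hb hu hu1 hw hw1 hq hq2 hv hv2 hK H.
have hqle1 : q <= 1 by nra.
have hq1 : 1 - w ^+ 2 <= q by nra.
have hu1' : u <= 1 by nra.
have hvu : v <= u + w by nra.
have H1 : be * (1 - u ^+ 2) * (1 + q) <= (K - be * u) * (v + u).
  have H2 : be * (v - q * u) * ((1 + q) * (v + u)) <= (1 - q) * K * ((1 + q) * (v + u)).
    apply: ler_wpM2r; first nra.
    lra.
  have E1 : be * (v - q * u) * ((1 + q) * (v + u)) =
     w ^+ 2 * (be * (1 + q) * (1 - u ^+ 2) + be * u * (v + u)).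
    have -> : be * (v - q * u) * ((1 + q) * (v + u)) =
       be * (1 + q) * (v ^+ 2 - u ^+ 2) + be * (1 - q ^+ 2) * u * (v + u) by ring.
    rewrite hv2 hq2; ring.
  have E2 : (1 - q) * K * ((1 + q) * (v + u)) = w ^+ 2 * (K * (v + u)).
    have -> : (1 - q) * K * ((1 + q) * (v + u)) = (1 - q ^+ 2) * (K * (v + u)) by ring.
    by rewrite hq2; ring.
  rewrite E1 E2 in H2.
  have hw2 : 0 < w ^+ 2 by rewrite exprn_gt0.
  rewrite ler_pM2l // in H2.
  lra.
have h2 : be * (1 - u ^+ 2) * (2 - w ^+ 2) <= be * (1 - u ^+ 2) * (1 + q).
  apply: ler_wpM2l; [nra | lra].
have h3 : (K - be * u) * (v + u) <= (K - be * u) * (2 * u + w).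
  apply: ler_wpM2l; lra.
have h4 : be * (w ^+ 2 * (1 - u ^+ 2)) <= be * w.
  apply: ler_wpM2l => //; nra.
nra.
Qed.

Theorem lemma1 (R : realType) (n : nat) (b lam : 'I_n.+1 -> R)
  (hlam_sorted : forall i j : 'I_n.+1, (i <= j)%N -> lam j <= lam i)
  (hlam_pos : 0 < lam ord_max)
  (ystar : 'I_n.+1 -> R)
  (hy_feas : simplex ystar)
  (hy_opt : forall y : 'I_n.+1 -> R, simplex y -> Fobj b lam ystar <= Fobj b lam y) :
  forall i : 'I_n.+1,
    b i ^+ 2 / (norm2 b + (Num.sqrt (lam ord_max))^-1) ^+ 2 <= ystar i.
Proof.
move=> i.
case: (hy_feas) => hy0 hy1.
set y := ystar in hy0 hy1 hy_opt *.
set lamd := lam ord_max in hlam_pos *.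
set N := norm2 b.
set M := N + (Num.sqrt lamd)^-1.
set be := `|b i|.
have hbe0 : 0 <= be by rewrite normr_ge0.
have hbe2 : b i ^+ 2 = be ^+ 2 by rewrite /be real_normK ?num_real.
have hN0 : 0 <= N by rewrite sqrtr_ge0.
have hsl : 0 < Num.sqrt lamd by rewrite sqrtr_gt0.
have hM0 : 0 < M by rewrite /M; have := invr_gt0 (Num.sqrt lamd); rewrite hsl => /= h; lra.
rewrite hbe2.
case: (leP (be ^+ 2 / M ^+ 2) (y i)) => // Hlt.
exfalso.
set u := Num.sqrt (y i).
have hu0 : 0 <= u by rewrite sqrtr_ge0.
have hu2 : u ^+ 2 = y i by rewrite sqr_sqrtr.
have hyi1 : y i <= 1.
  rewrite -hy1 (bigD1 i) //= lerDl; apply: sumr_ge0 => j _; exact: hy0.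
have huM : u * M < be.
  have hM2 : 0 < M ^+ 2 by rewrite exprn_gt0.
  rewrite ltr_pdivlMr // -hu2 in Hlt.
  have : (u * M) ^+ 2 < be ^+ 2 by rewrite exprMn.
  have : 0 <= u * M by rewrite mulr_ge0 // ltW.
  nra.
have hbpos : 0 < be.
  have : 0 <= u * M by rewrite mulr_ge0 // ltW.
  lra.
set s := \sum_(j < n.+1) `|b j| * Num.sqrt (y j).
set S := \sum_(j < n.+1) (lam j)^-1 * y j.
set r := Num.sqrt S.
have hlamj : forall j, 0 < lam j.
  move=> j; apply: lt_le_trans hlam_pos _; apply: hlam_sorted; exact: leq_ord.
have hr0 : 0 <= r by rewrite sqrtr_ge0.
have hsu : be * u <= s.
  rewrite /s (bigD1 i) //= lerDl; apply: sumr_ge0 => j _.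
  by rewrite mulr_ge0 ?normr_ge0 ?sqrtr_ge0.
have hs : s <= N.
  have hN2 : N ^+ 2 = \sum_(j < n.+1) b j ^+ 2.
    by rewrite /N /norm2 sqr_sqrtr // sumr_ge0 // => j _; rewrite sqr_ge0.
  have hNp : 0 < N.
    have : be ^+ 2 <= N ^+ 2.
      rewrite hN2 -hbe2 (bigD1 i) //= lerDl; apply: sumr_ge0 => j _; exact: sqr_ge0.
    nra.
  have : s <= \sum_(j < n.+1) (b j ^+ 2 / N + y j * N) / 2.
    apply: ler_sum => j _.
    have hyj := hy0 j.
    have hsj : (Num.sqrt (y j)) ^+ 2 = y j by rewrite sqr_sqrtr.
    have hbj : b j ^+ 2 = `|b j| ^+ 2 by rewrite real_normK ?num_real.
    set a := `|b j| in hbj *; set c := Num.sqrt (y j) in hsj *.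
    rewrite hbj -hsj.
    have hNi : N * N^-1 = 1 by rewrite mulfV // gt_eqF.
    have hNi0 : 0 < N^-1 by rewrite invr_gt0.
    have h : 0 <= (a * N^-1 - c) ^+ 2 * N by rewrite mulr_ge0 ?sqr_ge0 // ltW.
    have -> : (a ^+ 2 / N + c ^+ 2 * N) / 2 = a * c + ((a * N^-1 - c) ^+ 2 * N) / 2.
      have -> : (a * N^-1 - c) ^+ 2 * N = a ^+ 2 * N^-1 * (N * N^-1) - 2 * a * c * (N * N^-1) + c ^+ 2 * N by ring.
      by rewrite hNi; field; rewrite gt_eqF.
    by rewrite lerDl divr_ge0.
  move=> H0; rewrite -mulr_suml big_split /= -mulr_suml -mulr_suml hy1 -hN2 in H0.
  have e : N ^+ 2 / N = N by rewrite expr2 mulfK // gt_eqF.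
  rewrite e mul1r in H0; lra.
have hr : r <= (Num.sqrt lamd)^-1.
  rewrite /r -sqrtrV; last exact: ltW.
  apply: ler_wsqrtr.
  have : S <= \sum_(j < n.+1) lamd^-1 * y j.
    apply: ler_sum => j _; apply: ler_wpM2r => //.
    rewrite lef_pV2 ?posrE //; apply: hlam_sorted; exact: leq_ord.
  by rewrite -mulr_sumr hy1 mulr1.
set K := s + r.
have hKM : K <= M by rewrite /K /M; lra.
have hK : be * u <= K by rewrite /K; lra.
have huK : u * K < be by apply: le_lt_trans huM; rewrite ler_wpM2l.
set delta := 2 * (be - u * K).
set A := K - be * u + be.
have hd : 0 < delta by rewrite /delta; lra.
have hA : 0 <= A by rewrite /A; nra.
set w := delta / (delta + A).
have hw0 : 0 < w by rewrite divr_gt0 //; lra.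
have hw1 : w <= 1 by rewrite ler_pdivrMr; lra.
have hwA : w * A < delta.
  rewrite /w mulrAC ltr_pdivrMr; last lra.
  nra.
set t := w ^+ 2.
have ht0 : 0 < t by rewrite exprn_gt0.
have ht1 : t <= 1 by rewrite /t; nra.
have h1t : 0 <= 1 - t by lra.
set y' := fun j : 'I_n.+1 => (1 - t) * y j + t * (j == i)%:R.
have hsum1 : \sum_(j < n.+1) t * (j == i)%:R = t.
  rewrite (bigD1 i) //= eqxx mulr1 big1 ?addr0 // => j /negbTE ->.
  by rewrite mulr0.
have hy' : simplex y'.
  split.
    move=> j; rewrite /y' /=; apply: addr_ge0; apply: mulr_ge0 => //; exact: ltW.
  rewrite /y' big_split /= -mulr_sumr hy1 hsum1 mulr1; ring.
have Hopt := hy_opt y' hy'.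
rewrite /Fobj in Hopt.
set q := Num.sqrt (1 - t).
set v := Num.sqrt ((1 - t) * y i + t).
have hq0 : 0 <= q by rewrite sqrtr_ge0.
have hq2 : q ^+ 2 = 1 - w ^+ 2 by rewrite sqr_sqrtr.
have hv0 : 0 <= v by rewrite sqrtr_ge0.
have hv2 : v ^+ 2 = u ^+ 2 + w ^+ 2 * (1 - u ^+ 2).
  rewrite sqr_sqrtr ?hu2 /t; first ring.
  apply: addr_ge0; [apply: mulr_ge0 => // | exact: ltW].
have E1 : \sum_(j < n.+1) `|b j| * Num.sqrt (y' j) = q * s + be * (v - q * u).
  rewrite /s mulr_sumr.
  rewrite (eq_bigr (fun j => q * (`|b j| * Num.sqrt (y j)) + (j == i)%:R * (be * (v - q * u)))).
    rewrite big_split /=; congr (_ + _).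
    rewrite (bigD1 i) //= eqxx mul1r big1 ?addr0 // => j /negbTE ->.
    by rewrite mul0r.
  move=> j _; rewrite /y'.
  case: (eqVneq j i) => [-> | hji].
    rewrite /= mulr1 mul1r -/v -/u /be; ring.
  rewrite /= mulr0 addr0 mul0r addr0 sqrtrM //; rewrite -/q; ring.
have E2 : q * r <= Num.sqrt (\sum_(j < n.+1) (lam j)^-1 * y' j).
  rewrite /q /r -sqrtrM //; apply: ler_wsqrtr.
  rewrite /S mulr_sumr; apply: ler_sum => j _; rewrite /y'.
  have hl : 0 <= (lam j)^-1 by rewrite invr_ge0 ltW.
  have : 0 <= (lam j)^-1 * (t * (j == i)%:R) by rewrite mulr_ge0 // mulr_ge0 ?ler0n // ltW.
  have -> : (lam j)^-1 * ((1 - t) * y j + t * (j == i)%:R) =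
     (1 - t) * ((lam j)^-1 * y j) + (lam j)^-1 * (t * (j == i)%:R) by ring.
  lra.
rewrite E1 -/s -/r -/S in Hopt.
have H : q * K + be * (v - q * u) <= K.
  rewrite /K; lra.
have := @key R be u v q w K hbe0 hu0 _ hw0 hw1 hq0 hq2 hv0 hv2 hK H.
rewrite -/delta -/A.
have : u ^+ 2 <= 1 by rewrite hu2.
move=> hu21 /(_ hu21) hcon.
lra.
Qed.
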